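(* Let $n\in\mathbb N$ and let $u$ be real-valued with $u\in C^\infty(\mathbb R)$, $\partial_x^ku\in L^\infty(\mathbb R)$ for $k=0,1,2$, $4u-u_{xx}>0$ on $\mathbb R$, satisfying $\mathrm{s\text{-}CH}_n(u)=0$, with associated polynomial $R_{2n+2}(z)=\prod_{m=0}^{2n+1}(z-E_m)$, $E_0<E_1<\cdots<E_{2n}<E_{2n+1}=0$. Then for all $x\in\mathbb R$, $$4u(x)-u_{xx}(x)=-\Big(\prod_{m=0}^{2n}E_m\Big)\Big(\prod_{j=1}^n\mu_j(x)^{-2}\Big)>0\quad\text{and}\quad 4u(x)+2u_x(x)>0.$$
   Context: Stationary CH formalism. Let $\mathcal G=(-d^2/dx^2+4)^{-1}$, i.e. $(\mathcal Gv)(x)=\frac14\int_{\mathbb R}e^{-2|x-y|}v(y)\,dy$ on $L^\infty(\mathbb R)$. Put $f_0=1$ and for $\ell\ge1$ define $f_\ell$ by $f_{\ell,x}=-2\mathcal G\big(2(4u-u_{xx})f_{\ell-1,x}+(4u_x-u_{xxx})f_{\ell-1}\big)$, $f_\ell$ being fixed up to an additive integration constant $c_\ell$. Set $g_\ell=f_\ell+\frac12f_{\ell,x}$, $h_\ell=(4u-u_{xx})f_\ell-g_{\ell+1,x}$ for $0\le\ell\le n-1$, $h_n=(4u-u_{xx})f_n$, and $F_n(z,x)=\sum_{\ell=0}^nf_{n-\ell}(x)z^\ell$, $G_n$, $H_n$ analogously with $g_\ell$, $h_\ell$. The $n$th stationary CH equation is $\mathrm{s\text{-}CH}_n(u):=(u_{xxx}-4u_x)f_n-2(4u-u_{xx})f_{n,x}=0$;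 when it holds, $R_{2n+2}(z):=z^2G_n(z,x)^2+zF_n(z,x)H_n(z,x)$ is independent of $x$, monic of degree $2n+2$, with $R_{2n+2}(0)=0$. The zeros of the monic polynomial $F_n(\cdot,x)$ are $\mu_1(x),\dots,\mu_n(x)$. *)

(* Defs.v *)
From HB Require Import structures.
From mathcomp Require Import all_boot all_order all_algebra.
From mathcomp Require Import all_classical all_reals all_analysis.
From mathcomp Require Import complex.
Set Implicit Arguments. Unset Strict Implicit. Unset Printing Implicit Defensive.
Import Order.TTheory GRing.Theory Num.Theory.
Local Open Scope ring_scope.

Section CH.
Variable R : realType.

Definition dn (k : nat) (u : R -> R) : R -> R := derive1n k u.

(* Green's function of (-d^2/dx^2 + 4):
   (G v)(x) = 1/4 \int_R exp(-2|x-y|) v(y) dy  (Lebesgue integral) *)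
Definition Green (v : R -> R) (x : R) : R :=
  4^-1 * Rintegral (@lebesgue_measure R) setT
           (fun y => expR (-2 * `|x - y|) * v y).

Definition smooth_bdd2 (u : R -> R) : Prop :=
  (forall k x, derivable (dn k u) x 1) /\
  (forall k, (k <= 2)%N -> exists M : R, forall x, `|dn k u x| <= M).

(* f : nat -> R -> R is a family f_0 = 1, and for 1 <= l <= n,
   f_{l,x} = -2 G(2(4u-u_xx) f_{l-1,x} + (4u_x - u_xxx) f_{l-1})
   (each f_l thus fixed up to an additive constant c_l) *)
Definition CH_family (n : nat) (u : R -> R) (f : nat -> R -> R) : Prop :=
  f 0%N = (fun _ => 1) /\
  forall l, (1 <= l <= n)%N -> forall x,
    derivable (f l) x 1 /\
    derive1 (f l) x = -2 * Green (fun y =>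
        2 * (4 * u y - dn 2 u y) * derive1 (f l.-1) y
        + (4 * dn 1 u y - dn 3 u y) * f l.-1 y) x.

Definition gfun (f : nat -> R -> R) (l : nat) (x : R) : R :=
  f l x + 2^-1 * derive1 (f l) x.

Definition hfun (n : nat) (u : R -> R) (f : nat -> R -> R) (l : nat) (x : R) : R :=
  if (l < n)%N then (4 * u x - dn 2 u x) * f l x - derive1 (gfun f l.+1) x
  else (4 * u x - dn 2 u x) * f n x.

Definition Fpoly (n : nat) (f : nat -> R -> R) (x : R) : {poly R} :=
  \sum_(l < n.+1) f (n - l)%N x *: 'X^l.
Definition Gpoly (n : nat) (f : nat -> R -> R) (x : R) : {poly R} :=
  \sum_(l < n.+1) gfun f (n - l)%N x *: 'X^l.
Definition Hpoly (n : nat) (u : R -> R) (f : nat -> R -> R) (x : R) : {poly R} :=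
  \sum_(l < n.+1) hfun n u f (n - l)%N x *: 'X^l.

Definition sCH (n : nat) (u : R -> R) (f : nat -> R -> R) (x : R) : R :=
  (dn 3 u x - 4 * dn 1 u x) * f n x - 2 * (4 * u x - dn 2 u x) * derive1 (f n) x.

Definition Rpoly (n : nat) (u : R -> R) (f : nat -> R -> R) (x : R) : {poly R} :=
  'X^2 * Gpoly n f x ^+ 2 + 'X * Fpoly n f x * Hpoly n u f x.

End CH.

(* Main.v *)
Require Import Defs.
From HB Require Import structures.
From mathcomp Require Import all_boot all_order all_algebra.
From mathcomp Require Import all_classical all_reals all_analysis.
From mathcomp Require Import complex.
From mathcomp Require Import zify ring lra.
Import Order.TTheory GRing.Theory Num.Theory.
Local Open Scope ring_scope.
Lemma prodN_ord (T : comNzRingType) k (a : 'I_k -> T) :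
  \prod_(i < k) (- a i) = (-1) ^+ k * \prod_(i < k) a i.
Proof.
elim: k a => [|k IH] a; first by rewrite !big_ord0 expr0 mulr1.
rewrite !big_ord_recr /= IH exprSr mulrN1 mulNr mulrN; congr (- _).
by rewrite mulrA.
Qed.

Lemma coef0_prodXsub (T : comNzRingType) k (a : 'I_k -> T) :
  (\prod_(i < k) ('X - (a i)%:P))`_0 = (-1) ^+ k * \prod_(i < k) a i.
Proof.
rewrite -horner_coef0 horner_prod -prodN_ord; apply: eq_bigr => i _.
by rewrite hornerXsubC sub0r.
Qed.

Lemma coefF0 (R : realType) n (f : nat -> R -> R) x :
  (Fpoly n f x)`_0 = f n x.
Proof.
rewrite /Fpoly coef_sum big_ord_recl /= coefZ coefXn eqxx mulr1 subn0.
by rewrite big1 ?addr0 // => i _; rewrite coefZ coefXn /= mulr0.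
Qed.

Lemma coefH0 (R : realType) n u (f : nat -> R -> R) x :
  (Hpoly n u f x)`_0 = (4 * u x - dn 2 u x) * f n x.
Proof.
rewrite /Hpoly coef_sum big_ord_recl /= coefZ coefXn eqxx mulr1 subn0.
rewrite big1 ?addr0; first by rewrite /hfun ltnn.
by move=> i _; rewrite coefZ coefXn /= mulr0.
Qed.

Lemma keyid (R : realType) n u (f : nat -> R -> R) (E : nat -> R) x :
  Rpoly n u f x = \prod_(m < n.*2.+2) ('X - (E m)%:P) ->
  E n.*2.+1 = 0 ->
  f n x * ((4 * u x - dn 2 u x) * f n x) = - \prod_(m < n.*2.+1) E m.
Proof.
move=> HR HE.
have := congr1 (fun p : {poly R} => p`_1) HR.
rewrite /Rpoly coefD coefXnM /= -mulrA coefXM /= coef0M coefF0 coefH0 add0r.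
move=> ->; rewrite big_ord_recr /= HE subr0 coefMX /= coef0_prodXsub.
by rewrite -signr_odd /= odd_double /= mulN1r.
Qed.

Lemma Eneg (R : realType) n (E : nat -> R) :
  (forall m, (m < n.*2.+1)%N -> E m < E m.+1) ->
  E n.*2.+1 = 0 -> forall m, (m < n.*2.+1)%N -> E m < 0.
Proof.
move=> Hinc HE.
suff: forall d m, (m + d.+1 = n.*2.+1)%N -> E m < 0.
  move=> H m lm; apply: (H (n.*2 - m)%N); rewrite addnS subnKC // -ltnS.
elim=> [|d IH] m Hm.
  have Em : m.+1 = n.*2.+1 by rewrite -Hm addn1.
  by rewrite -HE -Em Hinc // -Em.
apply: lt_trans (IH m.+1 _); first by apply: Hinc; lia.
lia.
Qed.
Section An.
Variable R : realType.
Variable u : R -> R.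
Hypothesis hs : smooth_bdd2 u.
Hypothesis hm : forall x, 0 < 4 * u x - dn 2 u x.

Let w x := 4 * u x + 2 * dn 1 u x.
Let g x := w x * expR (-2 * x).

Lemma dnD (k : nat) (x : R) : is_derive x 1 (dn k u) (dn k.+1 u x).
Proof.
have := derivableP (proj1 hs k x); rewrite -derive1E.
by [].
Qed.

Lemma g_der (x : R) : is_derive x 1 g (- 2 * (4 * u x - dn 2 u x) * expR (-2 * x)).
Proof.
have hu : is_derive x 1 u (dn 1 u x) by exact: (dnD 0 x).
have hu1 : is_derive x 1 (dn 1 u) (dn 2 u x) by exact: (dnD 1 x).
have hw : is_derive x 1 w (4 * dn 1 u x + 2 * dn 2 u x).
  have H := is_deriveD (is_deriveZ 4 hu) (is_deriveZ 2 hu1).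
  exact: H.
have he : is_derive x 1 (fun y : R => expR (-2 * y)) (expR (-2 * x) * -2).
  have h1 : is_derive x 1 (fun y : R => -2 * y) (-2).
    have H := is_deriveZ (-2) (is_derive_id x (1:R)).
    rewrite scaler1 in H.
    exact: H.
  have h2 := is_derive_expR (-2 * x).
  have H := @is_derive1_comp R expR (fun y : R => -2 * y) x _ _ h2 h1.
  exact: H.
have H := is_deriveM hw he.
have -> : g = w * (fun y : R => expR (-2 * y)) by apply: funext.
apply: (is_derive_eq H).
rewrite /w /= /dn /= -![_ *: _]/(_ * _).
ring.
Qed.
Lemma g_dec (a b : R) : a < b -> g b < g a.
Proof.
move=> ab.
have [c _ hc] := @MVT R g (fun x => - 2 * (4 * u x - dn 2 u x) * expR (-2 * x)) a b ab
  (fun x _ => g_der x)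
  (derivable_within_continuous (fun y _ => @ex_derive _ _ _ _ _ _ _ (g_der y))).
rewrite -subr_lt0 hc pmulr_llt0 ?subr_gt0 //.
rewrite mulNr mulNr oppr_lt0; apply: mulr_gt0; last exact: expR_gt0.
by apply: mulr_gt0 => //; exact: hm.
Qed.

Lemma w_pos (x : R) : 0 < w x.
Proof.
have [M0 hM0] := proj2 hs 0%N isT.
have [M1 hM1] := proj2 hs 1%N isT.
set K := 4 * M0 + 2 * M1.
have hK : forall y, `|w y| <= K.
  move=> y.
  rewrite /w /K; apply: le_trans (ler_normD _ _) _.
  rewrite !normrM !normr_nat; apply: lerD; apply: ler_wpM2l => //.
have K0 : 0 <= K by apply: le_trans (hK x); exact: normr_ge0.
rewrite ltNge; apply/negP => wle.
have g0 : g x <= 0 by rewrite /g; apply: mulr_le0_ge0 => //; exact: ltW (expR_gt0 _).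
set x1 := x + 1.
have g1 : g x1 < 0 by apply: lt_le_trans g0; apply: g_dec; rewrite /x1 ltrDl.
set c := - g x1.
have c0 : 0 < c by rewrite /c oppr_gt0.
set y := `|x1| + K / c + 1.
have x1y : x1 < y by rewrite /y -addrA ltr_pwDr ?ler_norm //; apply: ltr_wpDl => //;
  apply: divr_ge0 => //; exact: ltW.
have gy := @g_dec x1 y x1y.
set ey := expR (-2 * y).
set E2 := expR (2 * y).
have eyE2 : ey * E2 = 1 by rewrite /ey /E2 -expRD mulNr addNr expR0.
have ey0 : 0 < ey := expR_gt0 _.
have E20 : 0 < E2 := expR_gt0 _.
have h1 : - w y * ey <= K * ey.
  apply: ler_wpM2r; first exact: ltW.
  by apply: le_trans (hK y); rewrite -normrN ler_norm.
have h2 : c < K * ey.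
  apply: lt_le_trans h1; rewrite /c mulNr ltrN2; exact: gy.
have h3 : c * E2 < K.
  by rewrite -[K]mulr1 -eyE2 mulrA ltr_pM2r.
have h4 : K < c * E2.
  have : 1 + 2 * y <= E2 := expR_ge1Dx _.
  have Kc : K = c * (K / c) by rewrite mulrC divfK // gt_eqF.
  move=> hE; rewrite [X in X < _]Kc ltr_pM2l //.
  apply: lt_le_trans hE.
  have hx : 0 <= `|x1| := normr_ge0 _.
  have hq : 0 <= K / c by apply: divr_ge0 => //; exact: ltW.
  rewrite /y; move: hq hx; set q := K / c; set z := `|x1|; move=> hq hx; lra.
by move: (lt_trans h3 h4); rewrite ltxx.
Qed.
End An.

Theorem mainTheorem4 (R : realType) (n : nat) (u : R -> R)
  (f : nat -> R -> R) (E : nat -> R) :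
  smooth_bdd2 u ->
  (forall x, 0 < 4 * u x - dn 2 u x) ->
  CH_family n u f ->
  (forall x, sCH n u f x = 0) ->
  (forall x, Rpoly n u f x = \prod_(m < n.*2.+2) ('X - (E m)%:P)) ->
  (forall m, (m < n.*2.+1)%N -> E m < E m.+1) ->
  E n.*2.+1 = 0 ->
  forall (x : R) (mu : 'I_n -> R[i]),
    map_poly (fun c : R => (c%:C)%C) (Fpoly n f x) = \prod_(j < n) ('X - (mu j)%:P) ->
    (((4 * u x - dn 2 u x)%:C)%C
       = - ((\prod_(m < n.*2.+1) E m)%:C)%C * \prod_(j < n) (mu j) ^- 2
     /\ 0 < 4 * u x - dn 2 u x)
    /\ 0 < 4 * u x + 2 * dn 1 u x.
Proof.
move=> hs hm hf hsCH HR Hinc HE x mu Hmu.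
split; last by have := @w_pos R u hs hm x.
split; last exact: hm.
have H1 := @keyid R n u f E x (HR x) HE.
have P0 : \prod_(m < n.*2.+1) E m != 0.
  by apply/prodf_neq0 => i _; apply: ltr0_neq0; apply: (@Eneg R n E Hinc HE).
have fn0 : f n x != 0.
  apply/eqP => h; move: H1; rewrite h mul0r => /eqP; rewrite eq_sym oppr_eq0.
  by rewrite (negbTE P0).
have Hmu0 : ((f n x)%:C)%C = (-1) ^+ n * \prod_(j < n) mu j.
  have := congr1 (fun p : {poly R[i]} => p`_0) Hmu.
  by rewrite /= coef_map /= coefF0 coef0_prodXsub.
rewrite prodfV prodrXl.
have -> : (\prod_(j < n) mu j) ^+ 2 = (((f n x)%:C)%C) ^+ 2.
  by rewrite Hmu0 exprMn -exprM mulnC exprM sqrrN !expr1n mul1r.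
rewrite -rmorphXn -fmorphV -rmorphN -rmorphM; apply: congr1.
by rewrite -H1 mulrCA -expr2 mulfK // expf_neq0.
Qed.
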